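(* For any natural number $n\ge1$ and variables $x,y$, \[ \Psi(xy,\,-x^2-y^2,\,n)=\frac{x^n+y^n}{(x+y)^{\delta(n)}},\qquad \Phi(xy,\,-x^2-y^2,\,n)=\frac{x^n-y^n}{(x-y)(x+y)^{\delta(n-1)}}. \]
   Context: $\delta(m)=1$ for $m$ odd, $0$ for $m$ even. $\Psi(a,b,n)$, $\Phi(a,b,n)$ are defined by $\Psi(a,b,0)=2$, $\Psi(a,b,1)=1$, $\Psi(a,b,n+1)=(2a-b)^{\delta(n)}\Psi(a,b,n)-a\Psi(a,b,n-1)$ and $\Phi(a,b,0)=0$, $\Phi(a,b,1)=1$, $\Phi(a,b,n+1)=(2a-b)^{\delta(n+1)}\Phi(a,b,n)-a\Phi(a,b,n-1)$ for $n\ge1$. *)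

(* Defs.v *)
From mathcomp Require Import all_boot all_order all_algebra.
Set Implicit Arguments. Unset Strict Implicit. Unset Printing Implicit Defensive.
Import GRing.Theory.
Local Open Scope ring_scope.

Definition delta (m : nat) : nat := odd m.

Fixpoint Psi (R : comRingType) (a b : R) (n : nat) : R :=
  match n with
  | 0 => 2%:R
  | 1 => 1
  | (m.+1 as k).+1 => (2%:R * a - b) ^+ delta k * Psi a b k - a * Psi a b m
  end.

Fixpoint Phi (R : comRingType) (a b : R) (n : nat) : R :=
  match n with
  | 0 => 0
  | 1 => 1
  | (m.+1 as k).+1 => (2%:R * a - b) ^+ delta k.+1 * Phi a b k - a * Phi a b m
  end.

(* Main.v *)
Require Import Defs.
From mathcomp Require Import all_boot all_order all_algebra.
From mathcomp Require Import ring.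
Import GRing.Theory.
Local Open Scope ring_scope.

Lemma aux (F : fieldType) (x y : F) (n : nat) :
  x + y != 0 -> x - y != 0 ->
  (Psi (x * y) (- x ^+ 2 - y ^+ 2) n = (x ^+ n + y ^+ n) / (x + y) ^+ delta n /\
  Phi (x * y) (- x ^+ 2 - y ^+ 2) n
    = (x ^+ n - y ^+ n) / ((x - y) * (x + y) ^+ delta n.-1)) /\
  (Psi (x * y) (- x ^+ 2 - y ^+ 2) n.+1 = (x ^+ n.+1 + y ^+ n.+1) / (x + y) ^+ delta n.+1 /\
  Phi (x * y) (- x ^+ 2 - y ^+ 2) n.+1
    = (x ^+ n.+1 - y ^+ n.+1) / ((x - y) * (x + y) ^+ delta n)).
Proof.
move=> hs hd.
elim: n => [|m [[IP0 IF0] [IP1 IF1]]].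
  { rewrite /delta /= !expr0 !expr1; split; split; field; rewrite ?mulr1 //.
    all: by rewrite oner_neq0. }
split; first by split.
have E: 2%:R * (x * y) - (- x ^+ 2 - y ^+ 2) = (x + y) ^+ 2 by ring.
move: IP0 IF0 IP1 IF1.
rewrite /= E /delta /=.
case: m => [|k] /=.
  { move=> -> -> -> ->; rewrite !expr0 !expr1 /=; split; field;
    by rewrite ?mulr1 ?mulf_neq0 ?oner_neq0 ?hs ?hd. }
case: (odd k) => /= -> -> -> ->; rewrite !exprS ?expr0 ?expr1; split; field;
  by rewrite ?mulr1 ?mulf_neq0 ?hs ?hd ?oner_neq0.
Qed.

Theorem theorem11p1 (F : fieldType) (x y : F) (n : nat) :
  (1 <= n)%N -> x + y != 0 -> x - y != 0 ->
  Psi (x * y) (- x ^+ 2 - y ^+ 2) n = (x ^+ n + y ^+ n) / (x + y) ^+ delta n /\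
  Phi (x * y) (- x ^+ 2 - y ^+ 2) n
    = (x ^+ n - y ^+ n) / ((x - y) * (x + y) ^+ delta n.-1).
Proof.
by move=> _ hs hd; case: (@aux F x y n hs hd).
Qed.
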